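(* Let $(B,k)$ be an instance of the orthogonal buttons and scissors problem. If $B$ has more than $k$ heavy rows or more than $k$ heavy columns, then $(B,k)$ is a no-instance.
   Context: An instance of the orthogonal buttons and scissors problem is a pair $(B,k)$ where $B$ is an $n\times m$ matrix with nonnegative integer entries and $k$ is a nonnegative integer. Cell $(i,j)$ contains a button of color $c$ if $B[i,j]=c>0$, and no button if $B[i,j]=0$. A cut is either a horizontal cut (a sequence of consecutive cells in one row) or a vertical cut (a sequence of consecutive cells in one column). Cuts are applied one after another; a cut is valid at the moment it is applied if, among the buttons still present, its first and last cells contain buttons and all buttons in its cells have the same color. Applying a cut deletes all buttons in its cells. $(B,k)$ is a yes-instance if some sequence of at most $k$ cuts, each valid when applied, removes all buttons of $B$, and a no-instance otherwise. A row or column of $B$ is heavy if it contains at least $k+1$ buttons. *)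

(* Defs.v *)
From mathcomp Require Import all_boot all_order all_algebra.
Set Implicit Arguments. Unset Strict Implicit. Unset Printing Implicit Defensive.

(* A board: an n x m matrix of natural numbers; 0 = no button, c > 0 = button of color c. *)
Definition board (n m : nat) := 'M[nat]_(n, m).

Inductive cut (n m : nat) : Type :=
| HCut (i : 'I_n) (j1 j2 : 'I_m)
| VCut (j : 'I_m) (i1 i2 : 'I_n).

Definition cut_cells n m (c : cut n m) : {set 'I_n * 'I_m} :=
  match c with
  | HCut i j1 j2 => [set p : 'I_n * 'I_m | (p.1 == i) && (j1 <= p.2 <= j2)]
  | VCut j i1 i2 => [set p : 'I_n * 'I_m | (p.2 == j) && (i1 <= p.1 <= i2)]
  end.

Definition cut_first n m (c : cut n m) : 'I_n * 'I_m :=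
  match c with HCut i j1 _ => (i, j1) | VCut j i1 _ => (i1, j) end.
Definition cut_last n m (c : cut n m) : 'I_n * 'I_m :=
  match c with HCut i _ j2 => (i, j2) | VCut j _ i2 => (i2, j) end.

Definition cut_ordered n m (c : cut n m) : bool :=
  match c with HCut _ j1 j2 => j1 <= j2 | VCut _ i1 i2 => i1 <= i2 end.

Definition buttons n m (B : board n m) : {set 'I_n * 'I_m} :=
  [set p : 'I_n * 'I_m | 0 < B p.1 p.2].

(* Validity of a cut w.r.t. the set S of cells whose buttons are still present:
   first and last cells contain (present) buttons, and all present buttons in
   the cut have the same color. *)
Definition valid_cut n m (B : board n m) (S : {set 'I_n * 'I_m}) (c : cut n m) : Prop :=
  [/\ cut_ordered c, cut_first c \in S, cut_last c \in S &
      exists col, forall p, p \in S -> p \in cut_cells c -> B p.1 p.2 = col].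

Definition apply_cut n m (S : {set 'I_n * 'I_m}) (c : cut n m) : {set 'I_n * 'I_m} :=
  S :\: cut_cells c.

Fixpoint valid_seq n m (B : board n m) (S : {set 'I_n * 'I_m}) (cs : seq (cut n m))
  : Prop :=
  match cs with
  | [::] => True
  | c :: cs' => valid_cut B S c /\ valid_seq B (apply_cut S c) cs'
  end.

Definition final_set n m (S : {set 'I_n * 'I_m}) (cs : seq (cut n m)) :=
  foldl (@apply_cut n m) S cs.

Definition yes_instance n m (B : board n m) (k : nat) : Prop :=
  exists cs : seq (cut n m),
    [/\ size cs <= k, valid_seq B (buttons B) cs & final_set (buttons B) cs = set0].

Definition no_instance n m (B : board n m) (k : nat) : Prop := ~ yes_instance B k.

Definition heavy_row n m (B : board n m) (k : nat) (i : 'I_n) : bool :=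
  k < #|[set j : 'I_m | 0 < B i j]|.
Definition heavy_col n m (B : board n m) (k : nat) (j : 'I_m) : bool :=
  k < #|[set i : 'I_n | 0 < B i j]|.

(* Main.v *)
Require Import Defs.
From mathcomp Require Import all_boot all_order all_algebra.
From mathcomp Require Import zify.
Set Implicit Arguments. Unset Strict Implicit.

Lemma covered n m (cs : seq (cut n m)) (S : {set 'I_n * 'I_m}) p :
  final_set S cs = set0 -> p \in S -> has (fun c => p \in cut_cells c) cs.
Proof.
elim: cs S => [|c cs IH] S /=.
  by rewrite /final_set /= => -> ; rewrite in_set0.
rewrite /final_set /= => H pS.
case E: (p \in cut_cells c) => //=.
apply: (IH (apply_cut S c)) => //.
by rewrite /apply_cut inE E pS.
Qed.

Lemma has_pmap (A B : Type) (T : eqType) (f : A -> option T) (P : pred A) x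
  (cs : seq A) : has P cs -> (forall c, P c -> f c = Some x) -> x \in pmap f cs.
Proof.
elim: cs => [|c cs IH] //= /orP [Pc|Hc] Hf.
  by rewrite (Hf c Pc) /= inE eqxx.
case: (f c) => [y|] /=; last exact: IH.
by rewrite inE (IH Hc Hf) orbT.
Qed.

Lemma has_pmap2 (A : Type) (T U : eqType) (f : A -> option T) (g : A -> option U)
  (P : pred A) x y (cs : seq A) : has P cs ->
  (forall c, P c -> f c = Some x \/ g c = Some y) -> x \in pmap f cs \/ y \in pmap g cs.
Proof.
elim: cs => [|c cs IH] //= /orP [Pc|Hc] Hf.
  by case: (Hf c Pc) => e; [left|right]; rewrite e /= inE eqxx.
case: (IH Hc Hf) => h; [left|right].
  by case: (f c) => //= ?; rewrite inE h orbT.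
by case: (g c) => //= ?; rewrite inE h orbT.
Qed.

Definition hrow n m (c : cut n m) : option 'I_n :=
  match c with HCut i _ _ => Some i | _ => None end.
Definition vcol n m (c : cut n m) : option 'I_m :=
  match c with VCut j _ _ => Some j | _ => None end.

Lemma card_pmap (A : Type) (T : finType) (f : A -> option T) (cs : seq A) :
  #|[set x in pmap f cs]| <= size cs.
Proof.
have h1 := card_size (pmap f cs).
have h2 : size (pmap f cs) <= size cs by rewrite size_pmap count_size.
have -> : #|[set x in pmap f cs]| = #|pmap f cs| by apply: eq_card => x; rewrite inE.
exact: leq_trans h1 h2.
Qed.

Lemma find_out {T : finType} (H X : {set T}) k :
  k < #|H| -> #|X| <= k -> exists2 i, i \in H & i \notin X.
Proof.
move=> h1 h2.
case: (boolP (H \subset X)) => [sub|].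
  by have := subset_leq_card sub; lia.
by move=> /subsetPn [i iH iX]; exists i.
Qed.

Theorem mainTheorem2 (n m : nat) (B : 'M[nat]_(n, m)) (k : nat) :
  (k < #|[set i : 'I_n | heavy_row B k i]| \/ k < #|[set j : 'I_m | heavy_col B k j]|) ->
  no_instance B k.
Proof.
move=> [Hr|Hc] [cs [Hs _ Hf]].
- have [i iH iX] := find_out Hr (leq_trans (card_pmap (@hrow n m) cs) Hs).
  rewrite inE /heavy_row in iH.
  have sub : [set j : 'I_m | 0 < B i j] \subset [set x in pmap (@vcol n m) cs].
    apply/subsetP => j; rewrite !inE => Bij.
    have hc : (i, j) \in buttons B by rewrite /buttons inE.
    have := covered Hf hc => {}hc.
    have side : forall c, (i, j) \in cut_cells c -> hrow c = Some i \/ vcol c = Some j.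
      case => [i' j1 j2|j' i1 i2]; rewrite /= inE /= => /andP [/eqP e _].
        by left; rewrite e.
      by right; rewrite e.
    case: (has_pmap2 hc side) => h.
      by move: iX; rewrite inE h.
    exact: h.
  have := subset_leq_card sub.
  have := card_pmap (@vcol n m) cs.
  move=> a b; move: (leq_trans (leq_trans b a) Hs); by rewrite leqNgt iH.
- have [j jH jX] := find_out Hc (leq_trans (card_pmap (@vcol n m) cs) Hs).
  rewrite inE /heavy_col in jH.
  have sub : [set i : 'I_n | 0 < B i j] \subset [set x in pmap (@hrow n m) cs].
    apply/subsetP => i; rewrite !inE => Bij.
    have hc : (i, j) \in buttons B by rewrite /buttons inE.
    have := covered Hf hc => {}hc.
    have side : forall c, (i, j) \in cut_cells c -> vcol c = Some j \/ hrow c = Some i.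
      case => [i' j1 j2|j' i1 i2]; rewrite /= inE /= => /andP [/eqP e _].
        by right; rewrite e.
      by left; rewrite e.
    case: (has_pmap2 hc side) => h.
      by move: jX; rewrite inE h.
    exact: h.
  have := subset_leq_card sub.
  have := card_pmap (@hrow n m) cs.
  move=> a b; move: (leq_trans (leq_trans b a) Hs); by rewrite leqNgt jH.
Qed.
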